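(* Let $q\ge 2$ and let $n,m$ be integers with $n/2\le m\le n$ and \[ \binom{2n-2m}{n-m}2^{2m-n}\le\binom{n}{m}q^{n-m}. \] Then for every integer $B\ge1$, the block communication scheme described in the context allows the receiver to recover the messages $w_1,w_2\in[q]^{Bm}$ of the two senders perfectly (with zero error) through at most $Bn+n-m+\lceil\log_q\binom nm\rceil$ uses of the two-user union channel with complete feedback. In particular, $R(\mathcal{O}_f)\ge R$, where $R$ is the solution in $(1/2,1]$ of $H_b(\alpha)+(1-\alpha)\log_2 q=1$, with $H_b(\alpha)=-\alpha\log_2\alpha-(1-\alpha)\log_2(1-\alpha)$ the binary entropy function.
   Context: The two-user union channel with input alphabet $[q]$ takes $x_1,x_2\in[q]$ and outputs $\{x_1,x_2\}$; with complete feedback, both senders see all previous channel outputs. An $(M_1,M_2,N,0)$ code with complete feedback consists of encoders $e_{ik}\colon[M_i]\times\mathcal{Y}^{k-1}\to[q]$ ($i=1,2$, $k\le N$, $\mathcal{Y}=\{y\subseteq[q]:|y|\in\{1,2\}\}$) and a decoder that recovers $(w_1,w_2)$ from the outputs $y_k=\{e_{1k}(w_1,y_{<k}),e_{2k}(w_2,y_{<k})\}$ without error for all messages. The zero-error capacity region $\mathcal{O}_f$ is the closure of $\{(R_1,R_2): NR_1\le\log_q M_1, NR_2\le\log_q M_2\text{ for some }(M_1,M_2,N,0)\text{ code}\}$, and $R(\mathcal{O}_f)=\sup\{\frac12(R_1+R_2):(R_1,R_2)\in\mathcal{O}_f\}$. The scheme: messages $w_1,w_2\in[q]^{Bm}$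 with digits $w_{1i},w_{2i}$. Let $S=\{(s_1,\dots,s_n): s_k\in\{*\}\cup[q],\ |\{k:s_k=*\}|=m\}$, so $|S|=\binom nm q^{n-m}$. After block $b$ ($0\le b\le B$), $U(b)\subseteq([q]\times[q])^{bm}$ is the set of candidate values of $((w_{1i},w_{2i}))_{i=1}^{bm}$ consistent with all outputs so far ($U(0)$ contains only the empty sequence), and both senders know $((w_{1i},w_{2i}))_{i=1}^{bm}$. In block $b+1$ ($b<B$, length $n$), the elements of $U(b)$ are injectively indexed by elements of $S$ via a rule fixed in advance (e.g. lexicographic orders, provided $|U(b)|\le|S|$); let $(s_1,\dots,s_n)$ be the index of the true value. At the $k$-th use, if $s_k\in[q]$ both senders send $s_k$; if $s_k$ is the $i$-th star, sender 1 sends $w_{1,bm+i}$ and sender 2 sends $w_{2,bm+i}$ (by feedback each then learns the other's digit). In the final block $B+1$, the senders resolve the remaining uncertainty $U(B)$ using $\lceil\log_q|U(B)|\rceil$ channel uses. *)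

(* Defs.v *)
From Stdlib Require Import Reals.
From mathcomp Require Import all_boot.

Set Implicit Arguments. Unset Strict Implicit. Unset Printing Implicit Defensive.

Section Union.
Variable q : nat.
Local Open Scope R_scope.

Definition dpair := ('I_q * 'I_q)%type.
(** channel output alphabet: subsets of [q] (of size 1 or 2) *)
Definition out := {set 'I_q}.
Definition union_out (x1 x2 : 'I_q) : out := [set x1; x2].

(** Encoder [e k w p] is the input at use number [k.+1] (k < N), given the
    message [w] and the previous outputs [p] (a sequence of length k). *)
Fixpoint outs (M1 M2 : nat) (e1 : nat -> 'I_M1 -> seq out -> 'I_q)
  (e2 : nat -> 'I_M2 -> seq out -> 'I_q) (k : nat) (w1 : 'I_M1) (w2 : 'I_M2)
  : seq out :=
  match k with
  | 0 => [::]
  | k'.+1 => let p := outs e1 e2 k' w1 w2 in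
             rcons p (union_out (e1 k' w1 p) (e2 k' w2 p))
  end.

Definition fb_code (M1 M2 N : nat) : Prop :=
  exists (e1 : nat -> 'I_M1 -> seq out -> 'I_q)
         (e2 : nat -> 'I_M2 -> seq out -> 'I_q)
         (dec : seq out -> 'I_M1 * 'I_M2),
    forall w1 w2, dec (outs e1 e2 N w1 w2) = (w1, w2).

Definition logq (x : nat) : R := (ln (INR x) / ln (INR q)).

Definition achievable (R1 R2 : R) : Prop :=
  exists M1 M2 N : nat, (0 < N)%N /\ fb_code M1 M2 N /\
    (INR N * R1 <= logq M1) /\ (INR N * R2 <= logq M2).

Definition Of_region (R1 R2 : R) : Prop :=
  forall eps : R, (0 < eps) -> exists a b : R, achievable a b /\
    (Rabs (a - R1) < eps) /\ (Rabs (b - R2) < eps).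

Definition sum_rates (x : R) : Prop :=
  exists R1 R2 : R, Of_region R1 R2 /\ x = ((R1 + R2) / 2).

Definition ROf_ge (r : R) : Prop :=
  exists s : R, is_lub sum_rates s /\ (r <= s).

Fixpoint allseqs (k : nat) : seq (seq dpair) :=
  match k with
  | 0 => [:: [::]]
  | k'.+1 => [seq x :: s | x <- enum [set: dpair], s <- allseqs k']
  end.

Section Scheme.
Local Open Scope nat_scope.
Variables (n m : nat).

(** S: sequences of length n over {*} u [q] (None = star) with m stars *)
Definition inS (s : seq (option 'I_q)) : bool :=
  (size s == n) && (count (pred1 None) s == m).

(** outputs of one block of length n with index s and new digits d: at a
    non-star position both send s_k; at the i-th star, sender j sends the
    i-th new digit of w_j. *)
Fixpoint blk (s : seq (option 'I_q)) (d : seq dpair) : seq out :=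
  match s with
  | [::] => [::]
  | Some a :: s' => union_out a a :: blk s' d
  | None :: s' => match d with
                  | [::] => [::]
                  | x :: d' => union_out x.1 x.2 :: blk s' d'
                  end
  end.

(** the indexing rule fixed in advance: [rule b L x] is the index in S of
    the candidate x among the list L (= U(b)) in block b+1 *)
Variable rule : nat -> seq (seq dpair) -> seq dpair -> seq (option 'I_q).

Fixpoint tr (b : nat) : seq dpair -> seq out :=
  match b with
  | 0 => fun _ => [::]
  | b'.+1 => fun v =>
      let t := tr b' in
      t v ++ blk (rule b' [seq x <- allseqs (b' * m) | t x == t v]
                           (take (b' * m) v))
                 (take m (drop (b' * m) v))
  end.

(** U(b): the candidates for the first bm digit pairs consistent with the
    outputs of the first b blocks (enumerated in a canonical order) *)
Definition cand (b : nat) (v : seq dpair) : seq (seq dpair) :=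
  [seq x <- allseqs (b * m) | tr b x == tr b v].

(** final block: [frule L x] is a q-ary string of length ceil(log_q |L|)
    identifying x in L; both senders send it. *)
Variable frule : seq (seq dpair) -> seq dpair -> seq 'I_q.

Definition full (B : nat) (v : seq dpair) : seq out :=
  tr B v ++ [seq union_out a a | a <- frule (cand B v) (take (B * m) v)].

End Scheme.

Local Open Scope nat_scope.
Definition valid_rule (n m : nat)
  (rule : nat -> seq (seq dpair) -> seq dpair -> seq (option 'I_q)) : Prop :=
  forall b L, uniq L -> size L <= 'C(n, m) * q ^ (n - m) ->
    {in L &, injective (rule b L)} /\ {in L, forall x, inS n m (rule b L x)}.

Definition valid_frule (frule : seq (seq dpair) -> seq dpair -> seq 'I_q)
  : Prop :=
  forall L, uniq L ->
    {in L &, injective (frule L)} /\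
    {in L, forall x, size (frule L x) = up_log q (size L)}.

End Union.

Local Open Scope R_scope.
(** binary entropy (in bits); note 0 * ln 0 = 0 with Stdlib's ln *)
Definition Hb (a : R) : R :=
  (- (a * ln a / ln 2) - ((1 - a) * ln (1 - a) / ln 2)).

(* Main.v *)
Require Import Defs.
From Stdlib Require Import Reals Lra ZArith.
From mathcomp Require Import all_boot.
From mathcomp Require Import zify.

Set Implicit Arguments. Unset Strict Implicit. Unset Printing Implicit Defensive.

Local Open Scope nat_scope.

Section Basic.
Variable q : nat.

Lemma mem_allseqs k (x : seq (dpair q)) : (x \in allseqs q k) = (size x == k).
Proof.
elim: k x => [|k IH] x /=; first by rewrite inE; case: x.
apply/allpairsP/idP.
  by case=> [[a s]] /= [_ Hs ->] /=; rewrite IH in Hs.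
case: x => [//|a s] /= Hs; exists (a, s) => /=; split => //.
  by rewrite mem_enum inE.
by rewrite IH.
Qed.

Lemma uniq_allseqs k : uniq (allseqs q k).
Proof.
elim: k => [|k IH] //=.
apply: allpairs_uniq => //; first exact: enum_uniq.
by move=> [a s] [b t] _ _ /= [-> ->].
Qed.

Lemma size_blk (s : seq (option 'I_q)) (d : seq (dpair q)) :
  count (pred1 None) s <= size d -> size (blk s d) = size s.
Proof.
elim: s d => [|[a|] s IH] d //=; first by move=> H; rewrite IH.
case: d => [|x d] //= H; by rewrite IH.
Qed.

Lemma union_outE (a b c d : 'I_q) : union_out a b = union_out c d ->
  (a = c /\ b = d) \/ (a = d /\ b = c).
Proof.
rewrite /union_out => E.
have Ha : a \in [set c; d] by rewrite -E !inE eqxx.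
have Hb : b \in [set c; d] by rewrite -E !inE eqxx orbT.
have Hc : c \in [set a; b] by rewrite E !inE eqxx.
have Hd : d \in [set a; b] by rewrite E !inE eqxx orbT.
move: Ha Hb Hc Hd; rewrite !inE.
by case: (a =P c); case: (a =P d); case: (b =P c); case: (b =P d);
  case: (c =P a); case: (c =P b); case: (d =P a); case: (d =P b) => //=; intros; subst; tauto.
Qed.

Lemma union_out_card (a b : 'I_q) : (1 < #|union_out a b|) = (a != b).
Proof. by rewrite /union_out cards2 ltnS lt0b. Qed.

(* explicit list of all (s, d) giving an output *)
Fixpoint Qs (y : seq (out q)) (k : nat) : seq (seq (option 'I_q) * seq (dpair q)) :=
  match y with
  | [::] => if k == 0 then [:: ([::], [::])] else [::]
  | o :: y' =>
      [seq (Some a :: p.1, p.2) | a <- [seq a <- enum 'I_q | o == union_out a a],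
                                  p <- Qs y' k] ++
      (if k is k'.+1 then
        [seq (None :: p.1, x :: p.2) | x <- [seq x <- enum [set: dpair q] | o == union_out x.1 x.2],
                                       p <- Qs y' k'] else [::])
  end.

Lemma Qs_complete s d : size d = count (pred1 None) s ->
  (s, d) \in Qs (blk s d) (count (pred1 None) s).
Proof.
elim: s d => [|[a|] s IH] d /=.
  by case: d.
- move=> Hd; rewrite add0n mem_cat; apply/orP; left.
  apply/allpairsP; exists (a, (s, d)) => /=; split => //.
    by rewrite mem_filter eqxx /= mem_enum inE.
  by apply: IH; rewrite Hd.
- case: d => [|x d] //= [Hd]; rewrite add1n mem_cat; apply/orP; right.
  apply/allpairsP; exists (x, (s, d)) => /=; split => //.
    by rewrite mem_filter eqxx /= mem_enum inE.
  by apply: IH; rewrite Hd.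
Qed.

Lemma size_le1 (T : eqType) (s : seq T) x0 :
  uniq s -> {in s, forall x, x = x0} -> size s <= 1.
Proof.
move=> Us H; have : {subset s <= [:: x0]} by move=> x /H ->; rewrite inE.
by move/(uniq_leq_size Us).
Qed.

Lemma size_fsing (o : out q) :
  size [seq a <- enum 'I_q | o == union_out a a] <= (1 < #|o|) ==> false.
Proof.
set s := [seq a <- _ | _].
have Us : uniq s by rewrite filter_uniq // enum_uniq.
case Hs: s => [|a s'] //; rewrite -Hs.
have : a \in s by rewrite Hs inE eqxx.
rewrite mem_filter => /andP [/eqP Ho _].
rewrite Ho union_out_card eqxx /=.
apply: (size_le1 (x0 := a)) => // b.
rewrite mem_filter Ho => /andP [/eqP E _].
by case: (union_outE E) => [[]|[]].
Qed.

Lemma size_fpair (o : out q) :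
  size [seq x <- enum [set: dpair q] | o == union_out x.1 x.2] <= (1 < #|o|).+1.
Proof.
set s := [seq x <- _ | _].
have Us : uniq s by rewrite filter_uniq // enum_uniq.
case Hs: s => [|[a b] s'] //; rewrite -Hs.
have : (a, b) \in s by rewrite Hs inE eqxx.
rewrite mem_filter => /andP [/eqP /= Ho _].
rewrite Ho union_out_card.
have sub : {subset s <= [:: (a, b); (b, a)]}.
  move=> [c d]; rewrite mem_filter Ho /= => /andP [/eqP E _].
  by case: (union_outE E) => [[-> ->]|[-> ->]]; rewrite !inE eqxx ?orbT.
case: eqP => [Eab|Nab] /=.
  subst b; apply: (size_le1 (x0 := (a, a))) => // x /sub.
  by rewrite !inE orbb => /eqP.
by have := uniq_leq_size Us sub.
Qed.

Definition bnd (N k m' : nat) := if k <= m' then 'C(N - k, m' - k) * 2 ^ k else 0.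

Definition kd (y : seq (out q)) := count (fun o : out q => 1 < #|o|) y.

Lemma size_Qs y k : size (Qs y k) <= bnd (size y) (kd y) k.
Proof.
rewrite /bnd; elim: y k => [|o y IH] k /=.
  by case: k.
rewrite size_cat size_allpairs.
have Hk : kd y <= size y by rewrite /kd count_size.
rewrite -/(kd y).
case Ho: (1 < #|o|) => /=.
- have := size_fsing o; rewrite Ho /= leqn0 => /eqP ->; rewrite mul0n add0n.
  case: k => [|k] //=.
  rewrite size_allpairs.
  have := size_fpair o; rewrite Ho => H2.
  have := IH k.
  rewrite !add1n ltnS !subSS.
  case: (kd y <= k) => H.
    rewrite expnS mulnCA; exact: leq_mul H2 H.
  by move: H; rewrite leqn0 => /eqP ->; rewrite muln0.
- have := size_fsing o; rewrite Ho /= => H1.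
  have := size_fpair o; rewrite Ho => H2.
  rewrite !add0n.
  have Hm1 := IH k.
  case: k Hm1 => [|k] Hm1.
    rewrite addn0; apply: leq_trans (leq_mul H1 Hm1) _; rewrite mul1n.
    by case: (kd y <= 0) => //; rewrite sub0n !bin0.
  have Hm2 := IH k.
  have E1 : size [seq a <- enum 'I_q | o == union_out a a] * size (Qs y k.+1)
       <= (if kd y <= k.+1 then 'C(size y - kd y, k.+1 - kd y) * 2 ^ kd y else 0).
    by apply: leq_trans (leq_mul H1 Hm1) _; rewrite mul1n.
  have E2 : size [seq (None :: p.1, x :: p.2) | x <- [seq x <- enum [set: dpair q] | o == union_out x.1 x.2],
                                       p <- Qs y k]
       <= (if kd y <= k then 'C(size y - kd y, k - kd y) * 2 ^ kd y else 0).
    by rewrite size_allpairs; apply: leq_trans (leq_mul H2 Hm2) _; rewrite mul1n.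
  apply: leq_trans (leq_add E1 E2) _.
  have -> : (size y).+1 - kd y = (size y - kd y).+1 by lia.
  case: (ltngtP (kd y) k.+1) => H.
  + have H' : kd y <= k by lia.
    have H'' : kd y <= k.+1 by lia.
    rewrite H'.
    have -> : k.+1 - kd y = (k - kd y).+1 by lia.
    by rewrite binS mulnDl.
  + have H' : (kd y <= k) = false by lia.
    by rewrite H'.
  + have H' : (kd y <= k) = false by lia.
    by rewrite H' addn0 -H subnn !bin0.
Qed.

End Basic.

Local Open Scope nat_scope.

Lemma bin_ratio r j : (j.+1) * 'C(r + j.+1, j.+1) = (r + j).+1 * 'C(r + j, j).
Proof. by rewrite -mul_bin_diag addnS. Qed.

Lemma binP_up r i : 'C(r + (r + i), r + i) * 2 ^ r <= 'C(r + r, r) * 2 ^ (r + i).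
Proof.
elim: i => [|i IH]; first by rewrite !addn0.
have E := bin_ratio r (r + i).
have H : 'C(r + (r + i).+1, (r + i).+1) <= 2 * 'C(r + (r + i), r + i).
  rewrite -(@leq_pmul2l (r + i).+1) // E mulnA leq_mul2r; apply/orP; right; lia.
have H' : 'C((r + (r + i)).+1, (r + i).+1) <= 2 * 'C(r + (r + i), r + i).
  by move: H; rewrite addnS.
rewrite !addnS expnS.
apply: leq_trans (leq_mul H' (leqnn _)) _.
by rewrite -mulnA [X in _ <= X]mulnCA leq_mul2l IH orbT.
Qed.

Lemma binP_down r i j : j + i = r -> 'C(r + j, j) * 2 ^ r <= 'C(r + r, r) * 2 ^ j.
Proof.
elim: i j => [|i IH] j Hj; first by rewrite addn0 in Hj; subst.
have H1 := IH j.+1 ltac:(lia).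
have E := bin_ratio r j.
have H : 2 * 'C(r + j, j) <= 'C(r + j.+1, j.+1).
  rewrite -(@leq_pmul2l j.+1) // E mulnA leq_mul2r; apply/orP; right; lia.
rewrite -(@leq_pmul2l 2) // mulnA; apply: leq_trans (leq_mul H (leqnn _)) _.
by rewrite mulnCA -expnS.
Qed.

Lemma binP r j : 'C(r + j, j) * 2 ^ r <= 'C(r + r, r) * 2 ^ j.
Proof.
case: (leqP r j) => H.
  have -> : j = r + (j - r) by lia.
  exact: binP_up.
by apply: (@binP_down r (r - j)); lia.
Qed.

Lemma bnd_le n m k : m <= n -> n <= 2 * m ->
  bnd n k m <= 'C(2 * n - 2 * m, n - m) * 2 ^ (2 * m - n).
Proof.
move=> Hmn Hnm; rewrite /bnd; case: ifP => // Hk.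
set r := n - m; set j := m - k.
have Hr : r <= m by lia.
have -> : n - k = r + j by lia.
have -> : 2 * n - 2 * m = r + r by lia.
have -> : 2 * m - n = m - r by lia.
have -> : k = m - j by lia.
rewrite -(@leq_pmul2r (2 ^ (r + j))) ?expn_gt0 //.
have -> : 'C(r + j, j) * 2 ^ (m - j) * 2 ^ (r + j) = ('C(r + j, j) * 2 ^ r) * 2 ^ m.
  by rewrite -!mulnA -!expnD; congr (_ * 2 ^ _); lia.
have -> : 'C(r + r, r) * 2 ^ (m - r) * 2 ^ (r + j) = ('C(r + r, r) * 2 ^ j) * 2 ^ m.
  by rewrite -!mulnA -!expnD; congr (_ * 2 ^ _); lia.
by rewrite leq_mul2r binP orbT.
Qed.

Local Open Scope nat_scope.

Section Scheme.
Variables (q n m : nat).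
Variable rule : nat -> seq (seq (dpair q)) -> seq (dpair q) -> seq (option 'I_q).
Hypothesis Hrule : valid_rule n m rule.
Hypothesis Hmn : m <= n.
Hypothesis Hnm : n <= 2 * m.
Hypothesis Hq : 0 < q.
Hypothesis Hcond : 'C(2 * n - 2 * m, n - m) * 2 ^ (2 * m - n) <= 'C(n, m) * q ^ (n - m).

Local Notation tr := (tr m rule).
Local Notation cand := (cand m rule).
Local Notation Cb := ('C(2 * n - 2 * m, n - m) * 2 ^ (2 * m - n)).
Local Notation bound := ('C(n, m) * q ^ (n - m)).

Lemma trS b v : tr b.+1 v =
  tr b v ++ blk (rule b (cand b v) (take (b * m) v)) (take m (drop (b * m) v)).
Proof. by []. Qed.

Lemma cand_eq b v v' : tr b v = tr b v' -> cand b v = cand b v'.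
Proof. by rewrite /Defs.cand => ->. Qed.

Lemma tr_take b v : tr b (take (b * m) v) = tr b v.
Proof.
elim: b v => [|b IH] v //.
rewrite !trS.
have E1 : take (b * m) (take (b.+1 * m) v) = take (b * m) v.
  by rewrite take_takel // mulSn leq_addl.
have E2 : take m (drop (b * m) (take (b.+1 * m) v)) = take m (drop (b * m) v).
  by rewrite !take_drop take_takel // mulSn addnC.
have T1 : tr b (take (b.+1 * m) v) = tr b v by rewrite -IH E1 IH.
by rewrite T1 E1 E2 (cand_eq T1).
Qed.

Lemma mem_cand b v x : (x \in cand b v) = (size x == b * m) && (tr b x == tr b v).
Proof. by rewrite /Defs.cand mem_filter mem_allseqs andbC. Qed.

Lemma uniq_cand b v : uniq (cand b v).
Proof. by rewrite /Defs.cand filter_uniq // uniq_allseqs. Qed.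

Lemma take_in_cand b v : b * m <= size v -> take (b * m) v \in cand b v.
Proof. by move=> H; rewrite mem_cand size_takel // eqxx tr_take eqxx. Qed.

Lemma bound_gt0 : 0 < bound.
Proof. by rewrite muln_gt0 bin_gt0 Hmn expn_gt0 Hq. Qed.

Definition Inv b := forall v, b * m <= size v ->
  size (cand b v) <= bound /\ size (tr b v) = b * n.

Lemma step b : Inv b -> forall v, b.+1 * m <= size v ->
  size (cand b.+1 v) <= Cb /\ size (tr b.+1 v) = b.+1 * n.
Proof.
move=> Ib v Hv.
have Hv' : b * m <= size v by apply: leq_trans Hv; rewrite leq_mul2r leqnSn orbT.
set L := cand b v.
have [sL trv] := Ib v Hv'.
have [injL inSL] := Hrule b (uniq_cand b v) sL.
have Hd : forall x : seq (dpair q), b.+1 * m <= size x -> size (take m (drop (b * m) x)) = m.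
  by move=> x Hx; rewrite size_takel // size_drop; move: Hx; nia.
have HS : inS n m (rule b L (take (b * m) v)) by apply: inSL; exact: take_in_cand.
move: (HS); rewrite /inS => /andP [/eqP sS /eqP cS].
split; last first.
  by rewrite trS size_cat trv size_blk ?sS ?cS ?Hd // mulSn addnC.
set y := blk (rule b L (take (b * m) v)) (take m (drop (b * m) v)).
pose phi x := (rule b L (take (b * m) x), take m (drop (b * m) x)).
have Hx : forall x : seq (dpair q), x \in cand b.+1 v ->
    [/\ size x = b.+1 * m, tr b x = tr b v, take (b * m) x \in L & blk (phi x).1 (phi x).2 = y].
  move=> x; rewrite mem_cand => /andP [/eqP sx /eqP tx].
  have Hx' : b * m <= size x by rewrite sx leq_mul2r leqnSn orbT.
  have [_ trx] := Ib x Hx'.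
  move: tx; rewrite !trS => /eqP; rewrite eqseq_cat ?trx ?trv // => /andP [/eqP E1 /eqP E2].
  have E3 : cand b x = L by apply: cand_eq.
  split => //.
    by rewrite mem_cand size_takel ?Hx' // eqxx tr_take E1 eqxx.
  by rewrite /phi /= -E3.
have injphi : {in cand b.+1 v &, injective phi}.
  move=> x x' Hx1 Hx2 [E1 E2].
  have [sx _ Lx _] := Hx x Hx1.
  have [sx' _ Lx' _] := Hx x' Hx2.
  have E3 := injL _ _ Lx Lx' E1.
  rewrite -(cat_take_drop (b * m) x) -(cat_take_drop (b * m) x') E3.
  congr (_ ++ _).
  rewrite -(@take_oversize _ m (drop (b * m) x)); last by rewrite size_drop sx mulSn; lia.
  rewrite -(@take_oversize _ m (drop (b * m) x')); last by rewrite size_drop sx' mulSn; lia.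
  exact: E2.
have sub : {subset map phi (cand b.+1 v) <= Qs y m}.
  move=> p /mapP [x Hx1 ->].
  have [sx _ Lx Ey] := Hx x Hx1.
  have : inS n m (phi x).1 by apply: inSL.
  rewrite /inS => /andP [_ /eqP cx].
  rewrite -Ey -cx -[phi x]/((phi x).1, (phi x).2).
  by apply: Qs_complete; rewrite cx /phi /= Hd // sx.
have := uniq_leq_size _ sub; rewrite map_inj_in_uniq // uniq_cand size_map => /(_ isT) H.
apply: leq_trans H _; apply: leq_trans (size_Qs _ _) _.
have -> : size y = n by rewrite /y size_blk ?sS // cS Hd.
exact: bnd_le.
Qed.

Lemma inv_all b : Inv b.
Proof.
elim: b => [|b IH].
  move=> v _; split => //.
  by have := bound_gt0; unfold Defs.cand; rewrite mul0n /=.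
move=> v Hv; have [H1 H2] := step IH Hv; split => //.
exact: leq_trans H1 Hcond.
Qed.

Lemma cand_le b v : b * m <= size v -> size (cand b v) <= bound.
Proof. by move=> H; have [] := inv_all H. Qed.

Lemma size_tr b v : b * m <= size v -> size (tr b v) = b * n.
Proof. by move=> H; have [] := inv_all H. Qed.

Lemma cand_leS b v : b.+1 * m <= size v -> size (cand b.+1 v) <= Cb.
Proof. by move=> H; have [] := step (@inv_all b) H. Qed.

Variable frule : seq (seq (dpair q)) -> seq (dpair q) -> seq 'I_q.
Hypothesis Hfrule : valid_frule frule.

Lemma size_full B v : B * m <= size v ->
  size (full m rule frule B v) = B * n + up_log q (size (cand B v)).
Proof.
move=> H; rewrite /full size_cat size_tr // size_map.
have [_ ->] := Hfrule (uniq_cand B v) => //.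
exact: take_in_cand.
Qed.

Lemma full_inj B v v' : size v = B * m -> size v' = B * m ->
  full m rule frule B v = full m rule frule B v' -> v = v'.
Proof.
move=> sv sv'; rewrite /full => /eqP; rewrite eqseq_cat ?size_tr ?sv ?sv' //.
move=> /andP [/eqP E1 /eqP E2].
have E3 := cand_eq E1.
rewrite E3 in E2.
have inj : injective (fun a : 'I_q => union_out a a).
  move=> a b /union_outE; tauto.
move: E2 => /(inj_map inj) E2.
have [injF _] := Hfrule (uniq_cand B v').
have Hv : take (B * m) v \in cand B v' by rewrite -E3 take_in_cand ?sv.
have Hv' : take (B * m) v' \in cand B v' by rewrite take_in_cand ?sv'.
have := injF _ _ Hv Hv' E2.
by rewrite !take_oversize ?sv ?sv'.
Qed.

End Scheme.

Local Open Scope nat_scope.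

Lemma zip_tuple_inj k T (w1 w2 w1' w2' : k.-tuple T) :
  zip w1 w2 = zip w1' w2' -> w1 = w1' /\ w2 = w2'.
Proof.
move=> E; split; apply: val_inj.
  by have := congr1 unzip1 E; rewrite !unzip1_zip ?size_tuple.
by have := congr1 unzip2 E; rewrite !unzip2_zip ?size_tuple.
Qed.

Lemma size_zip_tuple k T (w1 w2 : k.-tuple T) : size (zip w1 w2) = k.
Proof. by rewrite size_zip !size_tuple minnn. Qed.

Lemma part1 (q n m : nat) :
  (1 < q) -> (n <= 2 * m) -> (m <= n) ->
  ('C(2 * n - 2 * m, n - m) * 2 ^ (2 * m - n) <= 'C(n, m) * q ^ (n - m)) ->
  (forall (rule : nat -> seq (seq (dpair q)) -> seq (dpair q) ->
                  seq (option 'I_q))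
          (frule : seq (seq (dpair q)) -> seq (dpair q) -> seq 'I_q),
     valid_rule n m rule -> valid_frule frule ->
     forall B : nat, (0 < B) ->
       (forall (w1 w2 : (B * m).-tuple 'I_q) (b : nat), (b < B) ->
          (size (cand m rule b (zip w1 w2)) <= 'C(n, m) * q ^ (n - m))) /\
       (exists dec : seq (out q) -> (B * m).-tuple 'I_q * (B * m).-tuple 'I_q,
          forall w1 w2 : (B * m).-tuple 'I_q,
            dec (full m rule frule B (zip w1 w2)) = (w1, w2)) /\
       (forall w1 w2 : (B * m).-tuple 'I_q,
          (size (full m rule frule B (zip w1 w2))
             <= B * n + (n - m) + up_log q 'C(n, m)))).
Proof.
move=> Hq Hnm Hmn Hcond rule frule Hr Hf B HB.
have Hq0 : 0 < q by apply: ltnW.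
split; [|split].
- move=> w1 w2 b Hb; apply: (cand_le Hr Hmn Hnm Hq0 Hcond).
  by rewrite size_zip_tuple leq_mul2r ltnW ?orbT.
- have d0 : 'I_q := Ordinal Hq0.
  pose t0 := [tuple of nseq (B * m) d0].
  exists (fun y => odflt (t0, t0)
     [pick p : (B * m).-tuple 'I_q * (B * m).-tuple 'I_q |
        full m rule frule B (zip p.1 p.2) == y]).
  move=> w1 w2.
  case: pickP => [[w1' w2'] /= /eqP E|H]; last by have := H (w1, w2); rewrite eqxx.
  have := full_inj Hr Hmn Hnm Hq0 Hcond Hf (size_zip_tuple w1' w2') (size_zip_tuple w1 w2) E.
  by case/zip_tuple_inj => -> ->.
- move=> w1 w2.
  rewrite (size_full Hr Hmn Hnm Hq0 Hcond Hf) ?size_zip_tuple // -addnA leq_add2l.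
  have H1 : size (cand m rule B (zip w1 w2)) <= 'C(n, m) * q ^ (n - m).
    case: B HB w1 w2 => [//|B] _ w1 w2.
    apply: (leq_trans _ Hcond); apply: (cand_leS Hr Hmn Hnm Hq0 Hcond).
    by rewrite size_zip_tuple.
  apply: leq_trans (leq_up_log q H1) _.
  apply: up_log_min => //.
  rewrite expnD mulnC leq_mul2l; apply/orP; right; exact: up_logP.
Qed.

Local Open Scope nat_scope.

Section FB.
Variables (q M1 M2 N : nat).
Variable F : 'I_M1 -> 'I_M2 -> seq ('I_q * 'I_q).
Variable d0 : 'I_q.
Hypothesis HM1 : 0 < M1.
Hypothesis HM2 : 0 < M2.
Hypothesis HF : forall w1 w2, size (F w1 w2) = N.
Let U w1 w2 := [seq union_out p.1 p.2 | p <- F w1 w2].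
Hypothesis Hinj : forall w1 w2 w1' w2', U w1 w2 = U w1' w2' -> w1 = w1' /\ w2 = w2'.
Hypothesis Hdet1 : forall k w1 w2 w2', take k (U w1 w2) = take k (U w1 w2') ->
  (nth (d0, d0) (F w1 w2) k).1 = (nth (d0, d0) (F w1 w2') k).1.
Hypothesis Hdet2 : forall k w1 w1' w2, take k (U w1 w2) = take k (U w1' w2) ->
  (nth (d0, d0) (F w1 w2) k).2 = (nth (d0, d0) (F w1' w2) k).2.

Definition e1 (k : nat) (w1 : 'I_M1) (p : seq (out q)) : 'I_q :=
  if [pick w2 | take k (U w1 w2) == p] is Some w2 then (nth (d0, d0) (F w1 w2) k).1 else d0.
Definition e2 (k : nat) (w2 : 'I_M2) (p : seq (out q)) : 'I_q :=
  if [pick w1 | take k (U w1 w2) == p] is Some w1 then (nth (d0, d0) (F w1 w2) k).2 else d0.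

Lemma outs_U k w1 w2 : k <= N -> outs e1 e2 k w1 w2 = take k (U w1 w2).
Proof.
elim: k => [|k IH] Hk /=; first by rewrite take0.
rewrite IH ?(ltnW Hk) //.
have sU : size (U w1 w2) = N by rewrite size_map HF.
rewrite (take_nth (union_out d0 d0)) ?sU //.
congr rcons.
rewrite (nth_map (d0, d0)) ?HF //.
congr union_out.
- rewrite /e1; case: pickP => [w2' /eqP E|H]; last by have := H w2; rewrite eqxx.
  exact: Hdet1.
- rewrite /e2; case: pickP => [w1' /eqP E|H]; last by have := H w1; rewrite eqxx.
  exact: Hdet2.
Qed.

Lemma fb_sim : fb_code q M1 M2 N.
Proof.
exists e1, e2.
pose w0 := (Ordinal HM1, Ordinal HM2).
exists (fun y => odflt w0 [pick w : 'I_M1 * 'I_M2 | U w.1 w.2 == y]).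
move=> w1 w2; rewrite outs_U // take_oversize ?size_map ?HF //.
case: pickP => [[w1' w2'] /= /eqP E|H]; last by have := H (w1, w2); rewrite eqxx.
by case: (Hinj E) => -> ->.
Qed.

End FB.

Local Open Scope nat_scope.

Lemma nth_map' (T1 T2 : Type) (f : T1 -> T2) (x0 : T1) (s : seq T1) k :
  f (nth x0 s k) = nth (f x0) (map f s) k.
Proof. by elim: s k => [|x s IH] [|k] //=. Qed.

Section Det.
Variables (q n m : nat).
Variable rule : nat -> seq (seq (dpair q)) -> seq (dpair q) -> seq (option 'I_q).
Hypothesis Hrule : valid_rule n m rule.
Hypothesis Hmn : m <= n.
Hypothesis Hnm : n <= 2 * m.
Hypothesis Hq : 0 < q.
Hypothesis Hcond : 'C(2 * n - 2 * m, n - m) * 2 ^ (2 * m - n) <= 'C(n, m) * q ^ (n - m).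

Local Notation tr := (tr m rule).
Local Notation cand := (cand m rule).

Definition Uo (p : 'I_q * 'I_q) := union_out p.1 p.2.

Fixpoint blkx (s : seq (option 'I_q)) (d : seq (dpair q)) : seq ('I_q * 'I_q) :=
  match s with
  | [::] => [::]
  | Some a :: s' => (a, a) :: blkx s' d
  | None :: s' => match d with
                  | [::] => [::]
                  | x :: d' => x :: blkx s' d'
                  end
  end.

Fixpoint trx (b : nat) (v : seq (dpair q)) : seq ('I_q * 'I_q) :=
  match b with
  | 0 => [::]
  | b'.+1 => trx b' v ++ blkx (rule b' (cand b' v) (take (b' * m) v)) (take m (drop (b' * m) v))
  end.

Lemma trxS b v : trx b.+1 v = trx b v ++ blkx (rule b (cand b v) (take (b * m) v)) (take m (drop (b * m) v)).
Proof. by []. Qed.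

Lemma map_blkx s d : map Uo (blkx s d) = blk s d.
Proof. elim: s d => [|[a|] s IH] [|x d] //=; by rewrite IH. Qed.

Lemma map_trx b v : map Uo (trx b v) = tr b v.
Proof. elim: b => [|b IH] //=; by rewrite map_cat IH map_blkx. Qed.

Lemma size_trx b v : b * m <= size v -> size (trx b v) = b * n.
Proof.
move=> H; rewrite -(size_map Uo) map_trx; exact: (size_tr Hrule Hmn Hnm Hq Hcond).
Qed.

Variable proj : 'I_q * 'I_q -> 'I_q.
Hypothesis Hp1 : forall a, proj (a, a) = a.
Hypothesis Hp2 : forall x x', proj x = proj x' -> Uo x = Uo x' -> x = x'.

Lemma blkx_proj s d d' : map proj d = map proj d' ->
  map proj (blkx s d) = map proj (blkx s d').
Proof.
elim: s d d' => [|[a|] s IH] d d' //= E; first by rewrite (IH _ _ E).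
case: d d' E => [|x d] [|x' d'] //= [E1 E2]; by rewrite E1 (IH _ _ E2).
Qed.

Lemma blk_inj_proj s d d' : map proj d = map proj d' -> blk s d = blk s d' ->
  size d = count (pred1 None) s -> size d' = count (pred1 None) s -> d = d'.
Proof.
elim: s d d' => [|[a|] s IH] d d' //= E1 E2 s1 s2.
- by case: d d' s1 s2 {E1 E2} => [|? ?] [|? ?].
- by case: E2 => E2; apply: IH.
- case: d d' E1 E2 s1 s2 => [|x d] [|x' d'] //= [E1 E1'] [E2 E2'] [s1] [s2].
  rewrite (Hp2 E1 E2); congr cons; exact: IH.
Qed.

Lemma prefix_det b v v' : b * m <= size v -> size v = size v' ->
  map proj v = map proj v' -> tr b v = tr b v' -> take (b * m) v = take (b * m) v'.
Proof.
elim: b => [|b IH] Hv sv Ep Et; first by rewrite mul0n !take0.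
have Hv1 : b * m <= size v by apply: leq_trans Hv; rewrite leq_mul2r leqnSn orbT.
move: Et; rewrite !trS => /eqP; rewrite eqseq_cat; last first.
  by rewrite !(size_tr Hrule Hmn Hnm Hq Hcond) // -sv.
move=> /andP [/eqP E1 /eqP E2].
have E3 := IH Hv1 sv Ep E1.
rewrite -(cand_eq E1) -E3 in E2.
set s := rule b (cand b v) (take (b * m) v) in E2.
have inSs : inS n m s by have [_ ->] := Hrule b (uniq_cand m rule b v) (cand_le Hrule Hmn Hnm Hq Hcond Hv1) => //; exact: take_in_cand.
move: inSs => /andP [_ /eqP cs].
have Hd : forall w : seq (dpair q), b.+1 * m <= size w -> size (take m (drop (b * m) w)) = m.
  by move=> w Hw; rewrite size_takel // size_drop; move: Hw; nia.
rewrite mulSnr !takeD E3; congr (_ ++ _).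
apply: (blk_inj_proj _ E2).
- by rewrite !map_take !map_drop Ep.
- by rewrite cs Hd.
- by rewrite cs Hd // -sv.
Qed.

Lemma trx_det b k v v' : b * m <= size v -> size v = size v' ->
  map proj v = map proj v' -> take k (tr b v) = take k (tr b v') ->
  proj (nth (Ordinal Hq, Ordinal Hq) (trx b v) k) = proj (nth (Ordinal Hq, Ordinal Hq) (trx b v') k).
Proof.
set x0 := (Ordinal Hq, Ordinal Hq).
elim: b k => [|b IH] k Hv sv Ep Et //.
have Hv1 : b * m <= size v by apply: leq_trans Hv; rewrite leq_mul2r leqnSn orbT.
have Hv1' : b * m <= size v' by rewrite -sv.
have st := size_tr Hrule Hmn Hnm Hq Hcond Hv1.
have st' := size_tr Hrule Hmn Hnm Hq Hcond Hv1'.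
move: Et; rewrite !trxS !trS !take_cat st st' !nth_cat !size_trx //.
case: ltnP => Hk Et.
  exact: IH.
move/eqP: Et; rewrite eqseq_cat; last by rewrite st st'.
move=> /andP [/eqP E1 _].
have E3 := prefix_det Hv1 sv Ep E1.
rewrite -(cand_eq E1) -E3.
rewrite !(@nth_map' _ _ proj) (blkx_proj _ (d' := take m (drop (b * m) v'))) //.
by rewrite !map_take !map_drop Ep.
Qed.

End Det.

Local Open Scope nat_scope.

Section Code.
Variables (q n m : nat).
Variable rule : nat -> seq (seq (dpair q)) -> seq (dpair q) -> seq (option 'I_q).
Hypothesis Hrule : valid_rule n m rule.
Hypothesis Hmn : m <= n.
Hypothesis Hnm : n <= 2 * m.
Hypothesis Hq1 : 1 < q.
Let Hq : 0 < q := ltnW Hq1.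
Hypothesis Hcond : 'C(2 * n - 2 * m, n - m) * 2 ^ (2 * m - n) <= 'C(n, m) * q ^ (n - m).
Variable frule : seq (seq (dpair q)) -> seq (dpair q) -> seq 'I_q.
Hypothesis Hfrule : valid_frule frule.
Variable B : nat.
Hypothesis HB : 0 < B.

Local Notation tr := (tr m rule).
Local Notation cand := (cand m rule).
Local Notation trx := (trx m rule).

Let N := B * n + (n - m) + up_log q 'C(n, m).
Let x0 : 'I_q * 'I_q := (Ordinal Hq, Ordinal Hq).

Definition fpart v := [seq (a, a) | a <- frule (cand B v) (take (B * m) v)].
Definition tailx v := fpart v ++ nseq (N - B * n - size (fpart v)) x0.
Definition Fp v := trx B v ++ tailx v.

Lemma size_fpart v : size v = B * m -> size (fpart v) = up_log q (size (cand B v)).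
Proof.
move=> sv; rewrite size_map; have [_ ->] := Hfrule (uniq_cand m rule B v) => //.
by apply: take_in_cand; rewrite sv.
Qed.

Lemma fpart_le v : size v = B * m -> B * n + size (fpart v) <= N.
Proof.
move=> sv; rewrite /N size_fpart // -addnA leq_add2l.
have H1 : size (cand B v) <= 'C(n, m) * q ^ (n - m).
  case: B HB sv => [//|B'] _ sv.
  apply: (leq_trans _ Hcond); apply: (cand_leS Hrule Hmn Hnm Hq Hcond).
  by rewrite sv.
apply: leq_trans (leq_up_log q H1) _.
apply: up_log_min => //.
rewrite expnD mulnC leq_mul2l; apply/orP; right; exact: up_logP.
Qed.

Lemma size_Fp v : size v = B * m -> size (Fp v) = N.
Proof.
move=> sv; have := fpart_le sv.
rewrite /Fp /tailx !size_cat size_nseq (size_trx Hrule Hmn Hnm Hq Hcond) ?sv //.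
lia.
Qed.

Lemma map_Fp v : size v = B * m -> map (@Uo q) (Fp v) = tr B v ++ map (@Uo q) (tailx v).
Proof. by move=> sv; rewrite /Fp map_cat map_trx. Qed.

Lemma Fp_inj v v' : size v = B * m -> size v' = B * m ->
  map (@Uo q) (Fp v) = map (@Uo q) (Fp v') -> v = v'.
Proof.
move=> sv sv'; rewrite !map_Fp // => /eqP; rewrite eqseq_cat; last first.
  by rewrite !(size_tr Hrule Hmn Hnm Hq Hcond) ?sv ?sv'.
move=> /andP [/eqP E1 /eqP E2].
have E3 := cand_eq E1.
have sf : size (map (@Uo q) (fpart v)) = size (map (@Uo q) (fpart v')).
  by rewrite !(size_map (@Uo q)) !size_fpart // E3.
have E4 : map (@Uo q) (fpart v) = map (@Uo q) (fpart v').
  move: E2; rewrite /tailx !map_cat => /eqP; rewrite eqseq_cat // => /andP [/eqP -> _] //.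
apply: (full_inj Hrule Hmn Hnm Hq Hcond Hfrule sv sv').
rewrite /full E1; congr (_ ++ _).
by move: E4; rewrite /fpart -!map_comp.
Qed.

Variable proj : 'I_q * 'I_q -> 'I_q.
Hypothesis Hp1 : forall a, proj (a, a) = a.
Hypothesis Hp2 : forall x x', proj x = proj x' -> Uo x = Uo x' -> x = x'.

Lemma Fp_det k v v' : size v = B * m -> size v' = B * m -> map proj v = map proj v' ->
  take k (map (@Uo q) (Fp v)) = take k (map (@Uo q) (Fp v')) ->
  proj (nth x0 (Fp v) k) = proj (nth x0 (Fp v') k).
Proof.
move=> sv sv' Ep.
have st : size (tr B v) = B * n by rewrite (size_tr Hrule Hmn Hnm Hq Hcond) ?sv.
have st' : size (tr B v') = B * n by rewrite (size_tr Hrule Hmn Hnm Hq Hcond) ?sv'.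
rewrite !map_Fp // /Fp !nth_cat !(size_trx Hrule Hmn Hnm Hq Hcond) ?sv ?sv' //.
case: ltnP => Hk Et.
  apply: (trx_det Hrule Hmn Hnm Hq Hcond Hp2); rewrite ?sv ?sv' //.
  by move: Et; rewrite !take_cat st st' Hk.
have E1 : tr B v = tr B v'.
  have := congr1 (take (B * n)) Et.
  by rewrite !take_takel // !take_size_cat.
have Hv : B * m <= size v by rewrite sv.
have svv : size v = size v' by rewrite sv sv'.
have E3 := prefix_det Hrule Hmn Hnm Hq Hcond Hp2 Hv svv Ep E1.
rewrite !take_oversize ?sv ?sv' // in E3.
by rewrite E3.
Qed.

End Code.

Lemma scheme_code (q n m : nat) (rule : nat -> seq (seq (dpair q)) -> seq (dpair q) -> seq (option (ordinal q))) (frule : seq (seq (dpair q)) -> seq (dpair q) -> seq (ordinal q)) B :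
  valid_rule n m rule -> m <= n -> n <= 2 * m -> 1 < q ->
  'C(2 * n - 2 * m, n - m) * 2 ^ (2 * m - n) <= 'C(n, m) * q ^ (n - m) ->
  valid_frule frule -> 0 < B ->
  fb_code q (q ^ (B * m)) (q ^ (B * m)) (B * n + (n - m) + up_log q 'C(n, m)).
Proof.
move=> Hrule Hmn Hnm Hq1 Hcond Hfrule HB.
have Hq : 0 < q := ltnW Hq1.
have Ecard : #|{: (B * m).-tuple 'I_q}| = q ^ (B * m) by rewrite card_tuple card_ord.
pose tup (i : 'I_(q ^ (B * m))) : (B * m).-tuple 'I_q := enum_val (cast_ord (esym Ecard) i).
have tup_inj : injective tup by move=> i j /enum_val_inj /cast_ord_inj.
pose F i1 i2 := @Fp q n m rule Hq1 frule B (zip (tup i1) (tup i2)).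
have HM : 0 < q ^ (B * m) by rewrite expn_gt0 Hq.
apply: (@fb_sim q _ _ _ F (Ordinal (ltnW Hq1)) HM HM).
- by move=> w1 w2; rewrite /F size_Fp // size_zip_tuple.
- move=> w1 w2 w1' w2' E.
  have := Fp_inj Hrule Hmn Hnm Hcond Hfrule (size_zip_tuple _ _) (size_zip_tuple _ _) E.
  by case/zip_tuple_inj => /tup_inj -> /tup_inj ->.
- move=> k w1 w2 w2' E.
  apply: (Fp_det Hrule Hmn Hnm Hcond (proj := fst)).
  + move=> [a b] [c d] /= E1 E2.
    by rewrite /Uo /= in E2; case: (union_outE E2) => [[E3 E4]|[E3 E4]]; subst.
  + exact: size_zip_tuple.
  + exact: size_zip_tuple.
  + by rewrite -!/(unzip1 _) !unzip1_zip ?size_tuple.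
  + exact: E.
- move=> k w1 w1' w2 E.
  apply: (Fp_det Hrule Hmn Hnm Hcond (proj := snd)).
  + move=> [a b] [c d] /= E1 E2.
    by rewrite /Uo /= in E2; case: (union_outE E2) => [[E3 E4]|[E3 E4]]; subst.
  + exact: size_zip_tuple.
  + exact: size_zip_tuple.
  + by rewrite -!/(unzip2 _) !unzip2_zip ?size_tuple.
  + exact: E.
Qed.

Local Open Scope nat_scope.

Section Rules.
Variable q : nat.
Hypothesis Hq : 0 < q.

Fixpoint Sl (n m : nat) : seq (seq (option 'I_q)) :=
  match n with
  | 0 => if m == 0 then [:: [::]] else [::]
  | n'.+1 => (if m is m'.+1 then [seq None :: s | s <- Sl n' m'] else [::]) ++
             [seq Some a :: s | a <- enum 'I_q, s <- Sl n' m]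
  end.

Lemma Sl_inS n m x : x \in Sl n m -> inS n m x.
Proof.
rewrite /inS; elim: n m x => [|n IH] m x /=.
  by case: m => [|m] //=; rewrite inE => /eqP ->.
rewrite mem_cat => /orP [].
  case: m => [|m] //= /mapP [s /IH /andP [/eqP s1 /eqP s2] ->] /=.
  by rewrite s1 s2 ?add1n ?add0n !eqxx.
move=> /allpairsP [[a s] /= [_ /IH /andP [/eqP s1 /eqP s2] ->]] /=.
by rewrite s1 s2 ?add1n ?add0n !eqxx.
Qed.

Lemma Sl_uniq n m : uniq (Sl n m).
Proof.
elim: n m => [|n IH] m /=; first by case: (m == 0).
rewrite cat_uniq; apply/and3P; split.
- case: m => [|m] //; rewrite map_inj_uniq //; by move=> s t [].
- apply/hasPn => x /allpairsP [[a s] /= [_ _ ->]].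
  by case: m => [|m] //; apply/negP => /mapP [t _].
- apply: allpairs_uniq => //; first exact: enum_uniq.
  by move=> [a s] [b t] _ _ /= [-> ->].
Qed.

Lemma size_Sl n m : size (Sl n m) = 'C(n, m) * q ^ (n - m).
Proof.
elim: n m => [|n IH] m /=; first by case: m.
rewrite size_cat size_allpairs size_enum_ord.
case: m => [|m].
  by rewrite IH /= !subn0 bin0 !mul1n expnS.
rewrite size_map !IH binS mulnDl addnC subSS.
congr (_ + _).
case: (ltnP m n) => H.
  have -> : n - m = (n - m.+1).+1 by lia.
  by rewrite expnS mulnCA.
rewrite bin_small ?muln0 //; lia.
Qed.

Variables n m : nat.
Definition myrule (b : nat) (L : seq (seq (dpair q))) (x : seq (dpair q)) :=
  nth [::] (Sl n m) (index x L).

Lemma myrule_valid : valid_rule n m myrule.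
Proof.
move=> b L uL sL; rewrite -size_Sl in sL; split.
  move=> x y Hx Hy /eqP; rewrite /myrule nth_uniq ?Sl_uniq //.
    by move/eqP => E; rewrite -(nth_index [::] Hx) E nth_index.
  by apply: leq_trans sL; rewrite index_mem.
  by apply: leq_trans sL; rewrite index_mem.
move=> x Hx; apply: Sl_inS; apply: mem_nth.
by apply: leq_trans sL; rewrite index_mem.
Qed.

Fixpoint digits (k i : nat) : seq 'I_q :=
  match k with
  | 0 => [::]
  | k'.+1 => Ordinal (ltn_pmod i Hq) :: digits k' (i %/ q)
  end.

Lemma size_digits k i : size (digits k i) = k.
Proof. by elim: k i => [|k IH] i //=; rewrite IH. Qed.

Lemma digits_inj k i j : i < q ^ k -> j < q ^ k -> digits k i = digits k j -> i = j.
Proof.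
elim: k i j => [|k IH] i j /=.
  by rewrite expn0 !ltnS !leqn0 => /eqP -> /eqP ->.
move=> Hi Hj [E1 E2].
have Hi' : i %/ q < q ^ k by rewrite ltn_divLR // -expnSr.
have Hj' : j %/ q < q ^ k by rewrite ltn_divLR // -expnSr.
by rewrite (divn_eq i q) (divn_eq j q) (IH _ _ Hi' Hj' E2) E1.
Qed.

Definition myfrule (L : seq (seq (dpair q))) (x : seq (dpair q)) : seq 'I_q :=
  digits (up_log q (size L)) (index x L).

Lemma myfrule_valid : 1 < q -> valid_frule myfrule.
Proof.
move=> Hq1 L uL; split; last by move=> x _; rewrite /myfrule size_digits.
move=> x y Hx Hy /digits_inj E.
have H := up_logP (size L) Hq1.
have Ex : index x L = index y L.
  by apply: E; apply: leq_trans H; rewrite index_mem.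
by rewrite -(nth_index x Hx) Ex nth_index.
Qed.

End Rules.

Local Open Scope R_scope.

Lemma INR_expn a b : INR (a ^ b)%N = INR a ^ b.
Proof. elim: b => [|b IH]; first by rewrite expn0. by rewrite expnS mult_INR IH. Qed.

Lemma fact_eq n : (n`!)%N = Factorial.fact n.
Proof. elim: n => [|n IH] //; by rewrite factS IH. Qed.

Lemma INR_bin n k : (k <= n)%N -> INR 'C(n, k) = Binomial.C n k.
Proof.
move=> H; rewrite /Binomial.C.
have E := bin_fact H.
have E' : INR 'C(n, k) * (INR (Factorial.fact k) * INR (Factorial.fact (n - k))) = INR (Factorial.fact n).
  by have := congr1 INR E; rewrite !mult_INR !fact_eq.
have H1 := INR_fact_neq_0 k.
have H2 := INR_fact_neq_0 (n - k).
rewrite -E'; change (n - k)%coq_nat with (n - k)%N; field; split => //.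
Qed.

Section Entropy.
Variables (n m : nat) (a : R).
Hypothesis Hmn : (m <= n)%N.
Hypothesis Ha : 0 < a < 1.
Hypothesis Hm : INR m = a * INR n.

Let T k := INR 'C(n, k) * a ^ k * (1 - a) ^ (n - k).

Lemma T_ge0 k : 0 <= T k.
Proof.
rewrite /T; apply: Rmult_le_pos; [apply: Rmult_le_pos|].
- exact: pos_INR.
- apply: pow_le; lra.
- apply: pow_le; lra.
Qed.

Lemma T_sum : sum_f_R0 T n = 1.
Proof.
have := Binomial.binomial a (1 - a) n.
have -> : a + (1 - a) = 1 by lra.
rewrite pow1 => ->.
apply PartSum.sum_eq => i Hi; rewrite /T INR_bin; last exact/leP.
reflexivity.
Qed.

Lemma T_ratio k : (k < n)%N -> T k.+1 * (INR k.+1 * (1 - a)) = T k * (INR (n - k) * a).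
Proof.
move=> Hk; rewrite /T.
have E := mul_bin_left n k.
have E' : INR k.+1 * INR 'C(n, k.+1) = INR (n - k) * INR 'C(n, k) by have := congr1 INR E; rewrite !mult_INR.
have -> : (n - k = (n - k.+1).+1)%N by lia.
rewrite -!tech_pow_Rmult.
have -> : INR (n - k.+1).+1 = INR (n - k) by congr INR; lia.
transitivity ((INR k.+1 * INR 'C(n, k.+1)) * (a * a ^ k * (1 - a) ^ (n - k.+1) * (1 - a))); first ring.
rewrite E'; ring.
Qed.

Lemma T_up k : (k < m)%N -> T k <= T k.+1.
Proof.
move=> Hk.
have Hkn : (k < n)%N by lia.
have E := T_ratio Hkn.
have Hk1 : 0 < INR k.+1 * (1 - a).
  apply: Rmult_lt_0_compat; [apply: lt_0_INR; apply/ltP | lra]; done.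
have Hineq : INR k.+1 * (1 - a) <= INR (n - k) * a.
  rewrite minus_INR; last by apply/leP; lia.
  have : (k.+1 <= m)%N by [].
  move/leP/le_INR; rewrite S_INR => H.
  nra.
apply: (Rmult_le_reg_r (INR k.+1 * (1 - a))) => //.
rewrite E; apply: Rmult_le_compat_l => //; exact: T_ge0.
Qed.

Lemma T_down k : (m <= k)%N -> (k < n)%N -> T k.+1 <= T k.
Proof.
move=> Hk Hkn.
have E := T_ratio Hkn.
have Hk1 : 0 < INR k.+1 * (1 - a).
  apply: Rmult_lt_0_compat; [apply: lt_0_INR; apply/ltP | lra]; done.
have Hineq : INR (n - k) * a <= INR k.+1 * (1 - a).
  rewrite minus_INR; last by apply/leP; lia.
  move/leP/le_INR: Hk; rewrite S_INR => H.
  nra.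
apply: (Rmult_le_reg_r (INR k.+1 * (1 - a))) => //.
rewrite E; apply: Rmult_le_compat_l => //; exact: T_ge0.
Qed.

Lemma T_max k : (k <= n)%N -> T k <= T m.
Proof.
move=> Hk; case: (leqP k m) => H.
  have : forall i, (i <= m)%N -> T (m - i) <= T m.
    elim=> [|i IH] Hi; first by rewrite subn0; lra.
    apply: Rle_trans (IH (ltnW Hi)).
    have -> : (m - i = (m - i.+1).+1)%N by lia.
    apply: T_up; lia.
  move=> /(_ (m - k)%N (leq_subr _ _)).
  by rewrite subKn.
have : forall i, (m + i <= n)%N -> T (m + i) <= T m.
  elim=> [|i IH] Hi; first by rewrite addn0; lra.
  rewrite addnS in Hi *.
  apply: Rle_trans (IH (ltnW Hi)).
  apply: T_down; lia.
move=> /(_ (k - m)%N).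
by rewrite subnKC ?(ltnW H) //; apply.
Qed.

Lemma entropy : 1 <= (INR n + 1) * (INR 'C(n, m) * a ^ m * (1 - a) ^ (n - m)).
Proof.
have H : sum_f_R0 T n <= sum_f_R0 (fun _ => T m) n.
  apply: sum_Rle => k Hk; apply: T_max; exact/leP.
rewrite T_sum sum_cte S_INR in H.
rewrite Rmult_comm; exact H.
Qed.

End Entropy.

Local Open Scope R_scope.

Lemma ln_le' x y : 0 < x -> x <= y -> ln x <= ln y.
Proof.
move=> Hx [H|->]; last lra.
by left; apply: ln_increasing.
Qed.

Lemma ln_le_inv x y : 0 < x -> 0 < y -> ln x <= ln y -> x <= y.
Proof.
move=> Hx Hy H; case: (Rle_or_lt x y) => // H'.
have := ln_increasing y x Hy H'; lra.
Qed.

Lemma tangent x y : 0 < x -> 0 < y -> y * ln x + y - x <= y * ln y.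
Proof.
move=> Hx Hy.
have H := exp_ineq1_le (ln x - ln y).
rewrite /Rminus exp_plus exp_Ropp !exp_ln // in H.
have H2 : y * (1 + (ln x + - ln y)) <= y * (x * / y).
  apply: Rmult_le_compat_l; lra.
have E : y * (x * / y) = x by field; lra.
rewrite E in H2; nra.
Qed.

Definition g (x : R) := x * ln x + (1 - x) * ln (1 - x).

Lemma g_mono x y : / 2 <= x -> x <= y -> y < 1 -> g x <= g y.
Proof.
move=> Hx Hxy Hy; rewrite /g.
have Hx0 : 0 < x by lra.
have H1 := tangent Hx0 (ltac:(lra) : 0 < y).
have H2 := tangent (ltac:(lra) : 0 < 1 - x) (ltac:(lra) : 0 < 1 - y).
have H3 : ln (1 - x) <= ln x by apply: ln_le'; lra.
have H4 : 0 <= (y - x) * (ln x - ln (1 - x)) by apply: Rmult_le_pos; lra.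
nra.
Qed.

Definition Phi (q : nat) (x : R) := - x * ln x - (1 - x) * ln (1 - x) + (1 - x) * ln (INR q).

Lemma cond_real (q n m : nat) (a : R) : (0 < q)%N -> (m <= n)%N -> 0 < a < 1 ->
  INR m = a * INR n -> ln (INR n + 1) <= INR n * (Phi q a - ln 2) ->
  2 ^ n <= INR 'C(n, m) * INR q ^ (n - m).
Proof.
move=> Hq Hmn Ha Hm Hl.
have Hq0 : 0 < INR q by apply: lt_0_INR; apply/ltP.
have Hr : INR (n - m) = (1 - a) * INR n by rewrite minus_INR; [lra | apply/leP].
have Hn0 : 0 < INR n + 1 by have := pos_INR n; lra.
have Hpa : 0 < a ^ m by apply: pow_lt; lra.
have Hpb : 0 < (1 - a) ^ (n - m) by apply: pow_lt; lra.
have Hp2 : 0 < 2 ^ n by apply: pow_lt; lra.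
set P := (INR n + 1) * 2 ^ n * a ^ m * (1 - a) ^ (n - m).
have HP : 0 < P by rewrite /P; repeat apply: Rmult_lt_0_compat.
have HQ : 0 < INR q ^ (n - m) by apply: pow_lt.
have HPQ : P <= INR q ^ (n - m).
  apply: ln_le_inv => //.
  rewrite /P !ln_mult //; try (repeat apply: Rmult_lt_0_compat => //).
  rewrite !ln_pow; try lra.
  rewrite Hm Hr; move: Hl; rewrite /Phi.
  nra.
have E := entropy Hmn Ha Hm.
have HC : 0 <= INR 'C(n, m) by apply: pos_INR.
have : 2 ^ n * 1 <= 2 ^ n * ((INR n + 1) * (INR 'C(n, m) * a ^ m * (1 - a) ^ (n - m))).
  by apply: Rmult_le_compat_l; lra.
have -> : 2 ^ n * ((INR n + 1) * (INR 'C(n, m) * a ^ m * (1 - a) ^ (n - m))) = INR 'C(n, m) * P.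
  by rewrite /P; ring.
move=> H; apply: Rle_trans (_ : 2 ^ n <= INR 'C(n, m) * P) _; first lra.
by apply: Rmult_le_compat_l.
Qed.

Lemma bin_le_pow N k : ('C(N, k) <= 2 ^ N)%N.
Proof.
elim: N k => [|N IH] [|k] //.
  by rewrite bin0 expn_gt0.
by rewrite binS expnS mul2n -addnn leq_add.
Qed.

Lemma cond_nat (q n m : nat) : (m <= n)%N -> (n <= 2 * m)%N ->
  (2 ^ n <= 'C(n, m) * q ^ (n - m))%N ->
  ('C(2 * n - 2 * m, n - m) * 2 ^ (2 * m - n) <= 'C(n, m) * q ^ (n - m))%N.
Proof.
move=> H1 H2 H; apply: leq_trans H.
apply: leq_trans (leq_mul (bin_le_pow _ _) (leqnn _)) _.
by rewrite -expnD; apply: leq_pexp2l => //; lia.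
Qed.

Lemma cond_all (q n m : nat) (a : R) : (0 < q)%N -> (m <= n)%N -> (n <= 2 * m)%N -> 0 < a < 1 ->
  INR m = a * INR n -> ln (INR n + 1) <= INR n * (Phi q a - ln 2) ->
  ('C(2 * n - 2 * m, n - m) * 2 ^ (2 * m - n) <= 'C(n, m) * q ^ (n - m))%N.
Proof.
move=> Hq H1 H2 Ha Hm Hl; apply: cond_nat => //.
have := cond_real Hq H1 Ha Hm Hl.
rewrite -(INR_expn 2 n) -INR_expn -mult_INR => /INR_le /leP.
by [].
Qed.

Local Open Scope R_scope.

Lemma sum_rates_scheme (q n m B : nat) : (1 < q)%N -> (m <= n)%N -> (n <= 2 * m)%N ->
  ('C(2 * n - 2 * m, n - m) * 2 ^ (2 * m - n) <= 'C(n, m) * q ^ (n - m))%N ->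
  (0 < B)%N -> (0 < n)%N ->
  sum_rates q (INR (B * m) / INR (B * n + (n - m) + up_log q 'C(n, m))).
Proof.
move=> Hq1 Hmn Hnm Hc HB Hn.
have Hq0 : (0 < q)%N by apply: ltnW.
have Hf := scheme_code (@myrule_valid q Hq0 n m) Hmn Hnm Hq1 Hc (myfrule_valid Hq0 Hq1) HB.
set N := (B * n + (n - m) + up_log q 'C(n, m))%N in Hf *.
have HN : (0 < N)%N by rewrite /N; have := muln_gt0 B n; rewrite HB Hn /=; lia.
have HNr : 0 < INR N by apply: lt_0_INR; apply/ltP.
set R := INR (B * m) / INR N.
have Ha : achievable q R R.
  exists (q ^ (B * m))%N, (q ^ (B * m))%N, N; split => //; split => //.
  have E : INR N * R <= logq q (q ^ (B * m)).
    rewrite /logq INR_expn ln_pow; last by apply: lt_0_INR; apply/ltP.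
    have Hl : 0 < ln (INR q).
      rewrite -ln_1; apply: ln_increasing; first lra.
      by apply: (lt_INR 1); apply/ltP.
    rewrite /R; right; field; lra.
  by split.
exists R, R; split; last by field.
move=> eps He; exists R, R; split => //.
by rewrite Rminus_diag Rabs_R0; split.
Qed.

Lemma size_outs (q M1 M2 : nat) (e1 : nat -> 'I_M1 -> seq (out q) -> 'I_q) (e2 : nat -> 'I_M2 -> seq (out q) -> 'I_q) k w1 w2 :
  size (outs e1 e2 k w1 w2) = k.
Proof. by elim: k => [|k IH] //=; rewrite size_rcons IH. Qed.

Lemma fb_bound q M1 M2 N : fb_code q M1 M2 N ->
  [/\ (0 < M1)%N, (0 < M2)%N & (M1 * M2 <= #|{: out q}| ^ N)%N].
Proof.
case=> e1 [e2 [dec Hd]].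
have [w1 w2] := dec [::].
have H1 : (0 < M1)%N by apply: leq_ltn_trans (ltn_ord w1).
have H2 : (0 < M2)%N by apply: leq_ltn_trans (ltn_ord w2).
split => //.
pose t0 : N.-tuple (out q) := [tuple of nseq N set0].
pose f (w : 'I_M1 * 'I_M2) : N.-tuple (out q) := insubd t0 (outs e1 e2 N w.1 w.2).
have finj : injective f.
  move=> [a b] [c d] /(congr1 val); rewrite /f !val_insubd !size_outs eqxx /= => E.
  by rewrite -(Hd a b) -(Hd c d) E.
have := leq_card f finj.
by rewrite card_prod !card_ord card_tuple.
Qed.

Definition Kq (q : nat) := ln (INR #|{: out q}|) / ln (INR q).

Lemma achievable_bound q a b : (1 < q)%N -> achievable q a b -> a + b <= Kq q.
Proof.
move=> Hq [M1 [M2 [N [HN [Hf [Ha Hb]]]]]].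
have [H1 H2 H3] := fb_bound Hf.
have Hl : 0 < ln (INR q).
  rewrite -ln_1; apply: ln_increasing; first lra.
  by apply: (lt_INR 1); apply/ltP.
have HNr : 0 < INR N by apply: lt_0_INR; apply/ltP.
have HM1 : 0 < INR M1 by apply: lt_0_INR; apply/ltP.
have HM2 : 0 < INR M2 by apply: lt_0_INR; apply/ltP.
set K := #|{: out q}| in H3 *.
have HK : (0 < K)%N.
  rewrite lt0n; apply/eqP => E; move: H3; rewrite E exp0n // leqn0 muln_eq0 -!leqn0 leqNgt H1 leqNgt H2.
  by [].
have HKr : 0 < INR K by apply: lt_0_INR; apply/ltP.
have H3r : INR M1 * INR M2 <= INR K ^ N by rewrite -mult_INR -INR_expn; apply: le_INR; apply/leP.
have H4 : ln (INR M1) + ln (INR M2) <= INR N * ln (INR K).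
  by rewrite -ln_mult // -ln_pow //; apply: ln_le' => //; apply: Rmult_lt_0_compat.
rewrite /logq in Ha Hb.
have : INR N * (a + b) <= INR N * Kq q.
  rewrite /Kq Rmult_plus_distr_l.
  apply: Rle_trans (Rplus_le_compat _ _ _ _ Ha Hb) _.
  have -> : ln (INR M1) / ln (INR q) + ln (INR M2) / ln (INR q) = (ln (INR M1) + ln (INR M2)) / ln (INR q) by field; lra.
  have -> : INR N * (ln (INR K) / ln (INR q)) = (INR N * ln (INR K)) / ln (INR q) by field; lra.
  apply: Rmult_le_compat_r => //; left; apply: Rinv_0_lt_compat => //.
move=> H; apply: (Rmult_le_reg_l (INR N)) => //.
Qed.

Lemma sum_rates_bound q x : (1 < q)%N -> sum_rates q x -> x <= Kq q / 2.
Proof.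
move=> Hq [R1 [R2 [HO ->]]].
case: (Rle_or_lt (R1 + R2) (Kq q)) => H; first lra.
have [a [b [Hab [H1 H2]]]] := HO ((R1 + R2 - Kq q) / 2) ltac:(lra).
have := achievable_bound Hq Hab.
move: H1 H2 => /Rabs_def2 [H1 H1'] /Rabs_def2 [H2 H2'].
lra.
Qed.

Local Open Scope R_scope.

Lemma ln_q_pos (q : nat) : (1 < q)%N -> 0 < ln (INR q).
Proof.
move=> Hq; rewrite -ln_1; apply: ln_increasing; first lra.
by apply: (lt_INR 1); apply/ltP.
Qed.

Lemma Phi_gt (q : nat) x y : (1 < q)%N -> / 2 <= x -> x < y -> y < 1 -> Phi q y < Phi q x.
Proof.
move=> Hq Hx Hxy Hy.
have H := g_mono Hx (Rlt_le _ _ Hxy) Hy.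
have Hl := ln_q_pos Hq.
rewrite /g in H; rewrite /Phi.
nra.
Qed.

Lemma nat_of_up (y : R) : 0 < y -> exists a : nat, y < INR a /\ INR a <= y + 1.
Proof.
move=> Hy; have [H1 H2] := archimed y.
have Hz : (0 <= up y)%Z.
  apply: Z.lt_le_incl; apply: lt_0_IZR; lra.
exists (Z.to_nat (up y)); rewrite INR_IZR_INZ Z2Nat.id //; lra.
Qed.

Lemma exp_quad y : 0 <= y -> 1 + y + y * y / 4 <= exp y.
Proof.
move=> Hy.
have -> : exp y = exp (y / 2) * exp (y / 2) by rewrite -exp_plus; congr exp; field.
have H := exp_ineq1_le (y / 2).
have H0 : 0 <= 1 + y / 2 by lra.
have : (1 + y / 2) * (1 + y / 2) <= exp (y / 2) * exp (y / 2) by apply: Rmult_le_compat.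
lra.
Qed.

Section Exist.
Variables (q : nat) (Rs : R).
Hypothesis Hq : (1 < q)%N.
Hypothesis HRs : / 2 < Rs < 1.
Hypothesis HPhi : Phi q Rs = ln 2.

Lemma exists_nm L : L < Rs -> exists n m : nat,
  [/\ (0 < n)%N, (m <= n)%N, (n <= 2 * m)%N,
      ('C(2 * n - 2 * m, n - m) * 2 ^ (2 * m - n) <= 'C(n, m) * q ^ (n - m))%N &
      L < INR m / INR n].
Proof.
move=> HL.
set L' := Rmax L (/ 2).
have HL' : L' < Rs by apply: Rmax_lub_lt; lra.
have HL'2 : / 2 <= L' by apply: Rmax_r.
have HLL : L <= L' by apply: Rmax_l.
have [c Hc] := INR_archimed (Rs - L') 1 ltac:(lra).
have Hc0 : 0 < INR c.
  case: (Rle_or_lt (INR c) 0) => // H.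
  have := pos_INR c; nra.
have [a [Ha1 Ha2]] := nat_of_up (Rmult_lt_0_compat _ _ (ltac:(lra) : 0 < L') Hc0).
set al := INR a / INR c.
have Hal1 : L' < al.
  rewrite /al; apply: (Rmult_lt_reg_r (INR c)) => //.
  rewrite /Rdiv Rmult_assoc Rinv_l; lra.
have Hal2 : al < Rs.
  rewrite /al; apply: (Rmult_lt_reg_r (INR c)) => //.
  rewrite /Rdiv Rmult_assoc Rinv_l; lra.
have Ea : INR a = al * INR c by rewrite /al; field; lra.
have Hac : (a < c)%N.
  apply/ltP/INR_lt; rewrite Ea; nra.
have Hca : (c < 2 * a)%N.
  apply/ltP/INR_lt; rewrite mult_INR Ea /=; nra.
set d := Phi q al - ln 2.
have Hd : 0 < d.
  rewrite /d -HPhi; have := @Phi_gt q al Rs Hq ltac:(lra) Hal2 ltac:(lra); lra.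
have [t Ht] := INR_archimed (d * d) 4 ltac:(nra).
have Ht0 : 0 < INR t.
  case: (Rle_or_lt (INR t) 0) => // H.
  have := pos_INR t; nra.
have Hc1 : 1 <= INR c.
  have : (1 <= c)%N by lia.
  by move/leP/le_INR => H; simpl in H; lra.
exists (c * t)%N, (a * t)%N; split.
- rewrite muln_gt0; apply/andP; split; first lia.
  by apply/ltP/INR_lt.
- by rewrite leq_mul2r ltnW ?orbT.
- by rewrite mulnA leq_mul2r ltnW ?orbT.
- apply: (@cond_all q _ _ al); first by lia.
  + by rewrite leq_mul2r ltnW ?orbT.
  + by rewrite mulnA leq_mul2r ltnW ?orbT.
  + lra.
  + by rewrite !mult_INR Ea; ring.
  + rewrite mult_INR.
    set x := INR c * INR t.
    have Hx : INR t <= x by rewrite /x; nra.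
    have Hx4 : 4 <= d * d * x by nra.
    have Hdx : 0 <= d * x by nra.
    have := exp_quad Hdx.
    have Hx0 : 0 <= x by lra.
    have Hxx : x * 4 <= x * (d * d * x) by apply: Rmult_le_compat_l.
    move=> He.
    have E2 : d * x * (d * x) = x * (d * d * x) by ring.
    rewrite E2 in He; clearbody x.
    have Hle : x + 1 <= exp (d * x).
      move: Hxx He Hdx; generalize (x * (d * d * x)) (exp (d * x)) (d * x) => X Ex Y H1 H2 H3; clear -H1 H2 H3; lra.
    have := ln_le' (ltac:(lra) : 0 < x + 1) Hle.
    by rewrite ln_exp -/d Rmult_comm.
- rewrite !mult_INR.
  have -> : INR a * INR t / (INR c * INR t) = al by rewrite /al; field; lra.
  lra.
Qed.

End Exist.

Local Open Scope R_scope.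

Lemma part2 (q : nat) : (1 < q)%N ->
  (forall Rs : R, (1 / 2 < Rs <= 1) ->
     (Hb Rs + (1 - Rs) * (ln (INR q) / ln 2) = 1) ->
     ROf_ge q Rs).
Proof.
move=> Hq Rs [HR1 HR2] HH.
have Hl2 : 0 < ln 2 by have := ln_lt_2; lra.
have HPhi : Phi q Rs = ln 2.
  have -> : Phi q Rs = ln 2 * (Hb Rs + (1 - Rs) * (ln (INR q) / ln 2)).
    rewrite /Phi /Hb; field; lra.
  by rewrite HH Rmult_1_r.
have HRs1 : Rs < 1.
  case: HR2 => // E; subst Rs.
  move: HH; rewrite /Hb ln_1.
  have -> : (1 - 1) = 0 by ring.
  move=> HH.
  have : - (1 * 0 / ln 2) - (0 * ln 0 / ln 2) + 0 * (ln (INR q) / ln 2) = 0 by field; lra.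
  lra.
have HRs : / 2 < Rs < 1 by lra.
have [n0 [m0 [Hn0 Hmn0 Hnm0 Hc0 _]]] := exists_nm Hq HRs HPhi (ltac:(lra) : 0 < Rs).
have Hex := sum_rates_scheme Hq Hmn0 Hnm0 Hc0 (isT : (0 < 1)%N) Hn0.
have Hbd : bound (sum_rates q).
  by exists (Kq q / 2) => x Hx; apply: sum_rates_bound.
have [s [Hs1 Hs2]] := completeness _ Hbd (ex_intro _ _ Hex).
exists s; split; first by split.
case: (Rle_or_lt Rs s) => // Hlt; exfalso.
set eps := Rs - s.
have [n [m [Hn Hmn Hnm Hc Hr]]] := exists_nm Hq HRs HPhi (ltac:(lra) : (Rs + s) / 2 < Rs).
set c := ((n - m) + up_log q 'C(n, m))%N.
have Hn1 : 1 <= INR n by have : (1 <= n)%N by []; move/leP/le_INR => H; simpl in H; lra.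
have Hc0' : 0 <= INR c by apply: pos_INR.
have [B HB] := INR_archimed (eps / 2) (Rabs s * INR c) ltac:(rewrite /eps; lra).
have HB0 : (0 < B)%N.
  case: B HB => [|B] //= HB; have := Rabs_pos s; nra.
have HBr : 0 < INR B by apply: lt_0_INR; apply/ltP.
have Hx := sum_rates_scheme Hq Hmn Hnm Hc HB0 Hn.
have := Hs1 _ Hx.
have -> : (B * n + (n - m) + up_log q 'C(n, m) = B * n + c)%N by rewrite /c addnA.
rewrite plus_INR !mult_INR.
have HD : 0 < INR B * INR n + INR c by nra.
have Hm : ((Rs + s) / 2) * INR n < INR m.
  have E : INR m = (INR m / INR n) * INR n by field; lra.
  rewrite [X in _ < X]E; apply: Rmult_lt_compat_r => //; lra.
have Habs : s * INR c <= Rabs s * INR c by apply: Rmult_le_compat_r => //; apply: Rle_abs.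
have Hkey : s * (INR B * INR n + INR c) < INR B * INR m.
  have H1 : INR B * ((Rs - s) / 2 * INR n) <= INR B * (INR m - s * INR n).
    apply: Rmult_le_compat_l; lra.
  have H2 : INR B * (eps / 2) <= INR B * ((Rs - s) / 2 * INR n).
    apply: Rmult_le_compat_l; first lra.
    rewrite /eps; nra.
  nra.
move=> Hle.
have : s * (INR B * INR n + INR c) >= INR B * INR m.
  have := Rmult_le_compat_r _ _ _ (Rlt_le _ _ HD) Hle.
  have -> : INR B * INR m / (INR B * INR n + INR c) * (INR B * INR n + INR c) = INR B * INR m by field; lra.
  lra.
lra.
Qed.

Local Open Scope R_scope.

Theorem theorem6 (q n m : nat) :
  (1 < q)%N -> (n <= 2 * m)%N -> (m <= n)%N ->
  ('C(2 * n - 2 * m, n - m) * 2 ^ (2 * m - n) <= 'C(n, m) * q ^ (n - m))%N ->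
  (forall (rule : nat -> seq (seq (dpair q)) -> seq (dpair q) ->
                  seq (option 'I_q))
          (frule : seq (seq (dpair q)) -> seq (dpair q) -> seq 'I_q),
     valid_rule n m rule -> valid_frule frule ->
     forall B : nat, (0 < B)%N ->
       (* the indexing of U(b) by S is always possible *)
       (forall (w1 w2 : (B * m).-tuple 'I_q) (b : nat), (b < B)%N ->
          (size (cand m rule b (zip w1 w2)) <= 'C(n, m) * q ^ (n - m))%N) /\
       (* zero-error decoding *)
       (exists dec : seq (out q) -> (B * m).-tuple 'I_q * (B * m).-tuple 'I_q,
          forall w1 w2 : (B * m).-tuple 'I_q,
            dec (full m rule frule B (zip w1 w2)) = (w1, w2)) /\
       (* number of channel uses *)
       (forall w1 w2 : (B * m).-tuple 'I_q,
          (size (full m rule frule B (zip w1 w2))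
             <= B * n + (n - m) + up_log q 'C(n, m))%N)) /\
  (forall Rs : R, (1 / 2 < Rs <= 1) ->
     (Hb Rs + (1 - Rs) * (ln (INR q) / ln 2) = 1) ->
     ROf_ge q Rs).
Proof.
move=> Hq Hnm Hmn Hcond; split.
  exact: part1.
exact: part2.
Qed.
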